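(* Let $X$ be a convex subset of a uniformly convex normed space $(\widetilde{X},|\cdot|)$, and let $P,A\subseteq X$ be nonempty with $d(P,A)>0$. Let $\operatorname{dom}(P,A)=\{x\in X: d(x,P)\leq d(x,A)\}$. Then, with closure, interior and boundary taken relative to $X$ (with the topology induced by the norm), $$\partial(\operatorname{dom}(P,A))=\{x\in X: d(x,P)=d(x,A)\},$$ $$\operatorname{Int}(\operatorname{dom}(P,A))=\{x\in X: d(x,P)<d(x,A)\},$$ $$\operatorname{dom}(P,A)=\overline{\{x\in X: d(x,P)<d(x,A)\}}.$$
   Context: A normed space $(\widetilde{X},|\cdot|)$ is uniformly convex if for each $\epsilon\in(0,2]$ there is $\delta\in(0,1]$ such that for all $x,y\in\widetilde{X}$ with $|x|=|y|=1$ and $|x-y|\geq\epsilon$ one has $|(x+y)/2|\leq 1-\delta$. The metric is $d(x,y)=|x-y|$; for $x\in X$ and nonempty $S\subseteq X$, $d(x,S)=\inf\{d(x,s): s\in S\}$; and $d(P,A)=\inf\{d(p,a): p\in P, a\in A\}$. *)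

(* Defs.v *)
From mathcomp Require Import all_boot all_order all_algebra.
From mathcomp Require Import all_classical all_reals all_analysis.
Set Implicit Arguments. Unset Strict Implicit. Unset Printing Implicit Defensive.
Import Order.TTheory GRing.Theory Num.Theory.
Import numFieldNormedType.Exports.
Local Open Scope classical_set_scope.
Local Open Scope ring_scope.

Definition uniformly_convex (R : realType) (V : normedModType R) : Prop :=
  forall eps : R, 0 < eps -> eps <= 2 ->
    exists delta : R, 0 < delta /\ delta <= 1 /\
      forall x y : V, `|x| = 1 -> `|y| = 1 -> eps <= `|x - y| ->
        `|(2^-1 : R) *: (x + y)| <= 1 - delta.

Definition dist_pt (R : realType) (V : normedModType R) (x : V) (S : set V) : R :=
  inf [set `|x - s| | s in S].

Definition dist_sets (R : realType) (V : normedModType R) (P A : set V) : R :=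
  inf [set r : R | exists p, P p /\ exists a, A a /\ r = `|p - a|].

Definition rel_interior (R : realType) (V : normedModType R) (X D : set V) : set V :=
  [set x | X x /\ exists e : R, 0 < e /\
      forall y, X y -> `|x - y| < e -> D y].

Definition rel_closure (R : realType) (V : normedModType R) (X D : set V) : set V :=
  [set x | X x /\ forall e : R, 0 < e ->
      exists y, X y /\ D y /\ `|x - y| < e].

Definition rel_boundary (R : realType) (V : normedModType R) (X D : set V) : set V :=
  rel_closure X D `\` rel_interior X D.

Definition dom (R : realType) (V : normedModType R) (X P A : set V) : set V :=
  [set x | X x /\ dist_pt x P <= dist_pt x A].

(* Main.v *)
Require Import Defs.
From mathcomp Require Import all_boot all_order all_algebra.
From mathcomp Require Import all_classical all_reals all_analysis.
Set Implicit Arguments. Unset Strict Implicit.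
Import Order.TTheory GRing.Theory Num.Theory.
Import numFieldNormedType.Exports.
From mathcomp Require Import lra.
Local Open Scope classical_set_scope.
Local Open Scope ring_scope.
Section Dist.
Variables (R : realType) (V : normedModType R).
Implicit Types (x y : V) (S : set V).

Lemma dist_lbd x S : has_lbound [set `|x - s| | s in S].
Proof. by exists 0 => r [s _ <-]. Qed.

Lemma dist_le x S s : S s -> dist_pt x S <= `|x - s|.
Proof. by move=> Ss; apply: (ge_inf (dist_lbd x S)); exists s. Qed.

Lemma dist_ge x S r : S !=set0 -> (forall s, S s -> r <= `|x - s|) -> r <= dist_pt x S.
Proof.
move=> [s0 Ss0] H; apply: lb_le_inf; first by exists `|x - s0|, s0.
by move=> _ [s Ss <-]; apply: H.
Qed.

Lemma dist_approx x S e : S !=set0 -> 0 < e -> exists s, S s /\ `|x - s| < dist_pt x S + e.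
Proof.
move=> [s0 Ss0] e0.
have [_ [s Ss <-] H] := inf_adherent e0 (conj (ex_intro _ _ (ex_intro2 _ _ s0 Ss0 erefl)) (dist_lbd x S)).
by exists s.
Qed.

Lemma dist_ge0 x S : S !=set0 -> 0 <= dist_pt x S.
Proof. by move=> S0; apply: dist_ge => // s _. Qed.

Lemma dist_lip x y S : S !=set0 -> dist_pt x S <= dist_pt y S + `|x - y|.
Proof.
move=> S0; rewrite -lerBlDr; apply: dist_ge => // s Ss.
rewrite lerBlDr; apply: (le_trans (dist_le x Ss)).
by rewrite (addrC `|y - s|); apply: ler_distD.
Qed.

Lemma dsets_le (P A : set V) (p a : V) : P p -> A a -> dist_sets P A <= `|p - a|.
Proof.
move=> Pp Aa; apply: ge_inf; last by exists p; split => //; exists a.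
by exists 0 => r [p' [_ [a' [_ ->]]]].
Qed.

End Dist.
Section Vec.
Variables (R : realType) (V : normedModType R).
Lemma vec1 (x a : V) (t : R) : x - (x + t *: (a - x)) = t *: (x - a).
Proof. by rewrite opprD addrA subrr add0r -scalerN opprB. Qed.
Lemma vec2 (x a : V) (t : R) : (x + t *: (a - x)) - a = (1 - t) *: (x - a).
Proof. by rewrite scalerBl scale1r -scalerN opprB addrAC. Qed.
Lemma vec3 (x y s : V) : x - s = (x - y) + (y - s).
Proof. by rewrite addrA subrK. Qed.
Lemma vec4 (y a s : V) : s - a = (y - a) - (y - s).
Proof. by rewrite opprB [RHS]addrC addrA subrK. Qed.
Lemma vec5 (w1 w2 : V) (u b : R) : u *: w1 + b *: w2 = u *: (w1 + w2) + (b - u) *: w2.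
Proof. by rewrite scalerDr scalerBl -addrA (addrC (u *: w2)) subrK. Qed.
Lemma vec6 (w1 w2 : V) (u b : R) : u *: w1 - b *: w2 = (u - b) *: w1 + b *: (w1 - w2).
Proof. by rewrite scalerBl scalerBr addrA subrK. Qed.
End Vec.
Lemma convex_seg (R : realType) (V : normedModType R) (X : set V) (x a : V) (t : R) :
  convex_set X -> X x -> X a -> 0 <= t -> t <= 1 -> X (x + t *: (a - x)).
Proof.
move=> cX Xx Xa t0 t1.
have := cX a x (Itv01 t0 t1) (mem_set Xa) (mem_set Xx).
rewrite inE /=.
have -> : x + t *: (a - x) = t *: a + (1 - t) *: x.
  by rewrite scalerBr scalerBl scale1r addrCA.
done.
Qed.

Lemma key (R : realType) (V : normedModType R) (X S T : set V) (D : R) (x : V) :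
  uniformly_convex V -> convex_set X -> T `<=` X -> S !=set0 -> T !=set0 -> 0 < D ->
  (forall s t, S s -> T t -> D <= `|s - t|) -> X x -> dist_pt x S = dist_pt x T ->
  forall e, 0 < e -> exists y, X y /\ `|x - y| < e /\ dist_pt y T < dist_pt y S.
Proof.
move=> uc cX TX S0 T0 D0 HD Xx dST e e0.
set d := dist_pt x T.
have dD : D / 2 <= d.
  rewrite leNgt; apply/negP => dlt.
  have h : 0 < D/2 - d by lra.
  have [s [Ss Hs]] := dist_approx x S0 h.
  have [t [Tt Ht]] := dist_approx x T0 h.
  have := HD _ _ Ss Tt; have := ler_distD x s t; rewrite (distrC s x).
  rewrite dST -/d in Hs; lra.
have d0 : 0 < d by lra.
pose eps := Num.min 1 (D / (4 * (d + 2))).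
have eps0 : 0 < eps.
  rewrite lt_min ltr01 /=; apply: divr_gt0 => //; lra.
have eps1 : eps <= 1 by rewrite ge_min lexx.
have epsD : eps * (d + 2) <= D / 4.
  have : eps <= D / (4 * (d + 2)) by rewrite ge_min lexx orbT.
  rewrite ler_pdivlMr; last by lra.
  move=> h; nra.
have [delta [dl0 [dl1 Huc]]] : exists delta : R, 0 < delta /\ delta <= 1 /\
      forall w1 w2 : V, `|w1| = 1 -> `|w2| = 1 -> eps <= `|w1 - w2| ->
        `|(2^-1 : R) *: (w1 + w2)| <= 1 - delta.
  by apply: uc => //; lra.
pose t := Num.min (1/4) (e / (2 * (d + 1))).
have t0 : 0 < t.
  rewrite lt_min; apply/andP; split; first lra.
  apply: divr_gt0 => //; lra.
have t14 : t <= 1/4 by rewrite ge_min lexx.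
have te : t * (2 * (d + 1)) <= e.
  have : t <= e / (2 * (d + 1)) by rewrite ge_min lexx orbT.
  by rewrite ler_pdivlMr //; lra.
pose eta := Num.min (Num.min d (t * d * delta / 2)) (Num.min (D/4) 1).
have tdd0 : 0 < t * d * delta / 2.
  by apply: divr_gt0 => //; apply: mulr_gt0 => //; apply: mulr_gt0.
have eta0 : 0 < eta by rewrite !lt_min d0 tdd0 ltr01 /=; lra.
have etad : eta <= d by rewrite /eta !ge_min lexx.
have etat : eta <= t * d * delta / 2 by rewrite /eta !ge_min lexx orbT.
have etaD : eta <= D / 4 by rewrite /eta !ge_min lexx !orbT.
have eta1 : eta <= 1 by rewrite /eta !ge_min lexx !orbT.
have [a [Ta Ha]] := dist_approx x T0 eta0.
set r := `|x - a| in Ha.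
have rd : d <= r := dist_le x Ta.
pose y := x + t *: (a - x).
have Hxy : `|x - y| = t * r by rewrite /y vec1 normrZ ger0_norm //; lra.
have Hya : `|y - a| = (1 - t) * r by rewrite /y vec2 normrZ ger0_norm //; lra.
exists y; split; first by apply: convex_seg => //; [exact: TX | lra | lra].
split.
  rewrite Hxy; have : t * r <= t * (d + 1) by rewrite ler_pM2l //; lra.
  nra.
have : dist_pt y T <= (1 - t) * r by rewrite -Hya; apply: dist_le.
suff : (1 - t) * r + eta <= dist_pt y S by lra.
apply: dist_ge => // s Ss.
rewrite leNgt; apply/negP => Hb.
set beta := `|y - s| in Hb.
have xs : d <= `|x - s| by rewrite /d -dST; apply: dist_le.
have tri1 : `|x - s| <= t * r + beta by rewrite -Hxy; apply: ler_distD.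
have r0 : 0 < r by lra.
have trd : t * r <= d / 2.
  have : t * r <= 1/4 * r by rewrite ler_pM2r.
  lra.
have beta0 : 0 < beta by lra.
have tr0 : 0 < t * r by apply: mulr_gt0.
pose w1 := r^-1 *: (x - a).
pose w2 := beta^-1 *: (y - s).
have nw1 : `|w1| = 1.
  by rewrite /w1 normrZ ger0_norm ?invr_ge0 ?ltW // mulVf // gt_eqF.
have nw2 : `|w2| = 1.
  by rewrite /w2 normrZ ger0_norm ?invr_ge0 ?ltW // mulVf // gt_eqF.
have exy : x - y = (t * r) *: w1.
  by rewrite /y vec1 /w1 scalerA -mulrA mulfV ?mulr1 // gt_eqF.
have eya : y - a = ((1 - t) * r) *: w1.
  by rewrite /y vec2 /w1 scalerA -mulrA mulfV ?mulr1 // gt_eqF.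
have eys : y - s = beta *: w2.
  by rewrite /w2 scalerA mulfV ?scale1r // gt_eqF.
case: (leP eps `|w1 - w2|) => hw.
- have hm := Huc _ _ nw1 nw2 hw.
  rewrite normrZ ger0_norm in hm; last by rewrite invr_ge0; lra.
  have hn : `|w1 + w2| <= 2 * (1 - delta) by lra.
  have h1 : `|x - s| <= t * r * `|w1 + w2| + (beta - t * r).
    rewrite (vec3 x y s) exy eys vec5.
    apply: le_trans (ler_normD _ _) _.
    rewrite (normrZ (t * r)) (normrZ (beta - t * r)) nw2 mulr1 !ger0_norm //; lra.
  have h2 : t * r * `|w1 + w2| <= t * r * (2 * (1 - delta)) by rewrite ler_pM2l.
  have h3 : t * d * delta <= t * r * delta.
    by rewrite ler_pM2r // ler_pM2l.
  nra.
- have h1 : `|s - a| <= `|(1 - t) * r - beta| + beta * `|w1 - w2|.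
    rewrite (vec4 y a s) eya eys vec6.
    apply: le_trans (ler_normD _ _) _.
    by rewrite (normrZ ((1 - t) * r - beta)) (normrZ beta) nw1 mulr1 (ger0_norm (ltW beta0)).
  have h2 : `|(1 - t) * r - beta| < eta.
    rewrite ltr_norml; apply/andP; split; lra.
  have h3 : beta * `|w1 - w2| <= beta * eps by rewrite ler_pM2l // ltW.
  have h4 : beta * eps <= (d + 2) * eps by rewrite ler_pM2r //; lra.
  have := HD _ _ Ss Ta.
  lra.
Qed.
Theorem theorem3p3 (R : realType) (V : normedModType R) (X P A : set V) :
  uniformly_convex V ->
  convex_set X ->
  P `<=` X -> A `<=` X ->
  P !=set0 -> A !=set0 ->
  0 < dist_sets P A ->
  [/\ rel_boundary X (dom X P A) = [set x | X x /\ dist_pt x P = dist_pt x A],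
      rel_interior X (dom X P A) = [set x | X x /\ dist_pt x P < dist_pt x A]
    & dom X P A = rel_closure X [set x | X x /\ dist_pt x P < dist_pt x A]].
Proof.
move=> uc cX PX AX P0 A0 D0.
have HD : forall s t, P s -> A t -> dist_sets P A <= `|s - t|.
  by move=> s t Ps At; apply: dsets_le.
have HD' : forall s t, A s -> P t -> dist_sets P A <= `|s - t|.
  by move=> s t As Pt; rewrite distrC; apply: dsets_le.
have Hint : rel_interior X (dom X P A) = [set x | X x /\ dist_pt x P < dist_pt x A].
  apply/seteqP; split => z.
  - move=> [Xz [e [e0 He]]]; split => //.
    have dz : dist_pt z P <= dist_pt z A.
      by have := He z Xz; rewrite subrr normr0 => /(_ e0) [].
    rewrite lt_neqAle dz andbT; apply/eqP => eq.
    have [y [Xy [zy hy]]] := key uc cX AX P0 A0 D0 HD Xz eq e0.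
    have := (He y Xy zy).2; lra.
  - move=> [Xz lt]; split => //.
    exists ((dist_pt z A - dist_pt z P) / 2); split; first lra.
    move=> y Xy zy; split => //.
    have := dist_lip y z P0; have := dist_lip z y A0; rewrite (distrC y z); lra.
have closed : rel_closure X (dom X P A) `<=` dom X P A.
  move=> z [Xz H]; split => //; rewrite leNgt; apply/negP => lt.
  have [y [Xy [[_ dy] zy]]] := H ((dist_pt z P - dist_pt z A) / 2) ltac:(lra).
  have := dist_lip z y P0; have := dist_lip y z A0; rewrite (distrC y z); lra.
split => //.
- apply/seteqP; split => z.
  + move=> [cl nint]; have [Xz dz] := closed z cl; split => //.
    apply/eqP; rewrite eq_le dz /= leNgt; apply/negP => lt.
    by apply: nint; rewrite Hint.
  + move=> [Xz eq]; split.
      split => // e e0; exists z; split => //; split; last by rewrite subrr normr0.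
      by split => //; rewrite eq.
    by rewrite Hint => -[_]; rewrite eq ltxx.
- apply/seteqP; split => z.
  + move=> [Xz dz]; split => // e e0.
    have [lt|eq] : dist_pt z P < dist_pt z A \/ dist_pt z P = dist_pt z A.
      by move: dz; rewrite le_eqVlt => /orP[/eqP->|->]; auto.
      by exists z; rewrite subrr normr0.
    have [y [Xy [zy hy]]] := key uc cX PX A0 P0 D0 HD' Xz (esym eq) e0.
    by exists y.
  + move=> h; apply: closed; move: h => [Xz H]; split => // e e0.
    have [y [Xy [[_ hy] zy]]] := H e e0.
    by exists y; split => //; split => //; split => //; apply: ltW.
Qed.
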